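(* In the second phase of the algorithm EM-GenPA (described in the context), processing the host requests sorted in ascending order by requested degree first and by new node (equivalently, time) second yields the same output distribution as processing them in ascending order of time; i.e., it correctly retains the output distribution of general preferential attachment.
   Context: General preferential attachment: start from a seed graph $G_0=(V_0,E_0)$ with $n_0$ nodes; iteratively add $N$ new nodes $v_{n_0+1},\dots,v_{n_0+N}$, each connected to $\ell\le n_0$ different earlier nodes (hosts), where a node $h$ of degree $d$ is chosen as host with probability proportional to $f(d)$ for a function $f:\mathbb N\to\mathbb R$. EM-GenPA works in two phases. Phase 1 samples, for each new node $v_{n_0+i}$ and each $j\in\{1,\dots,\ell\}$, only the degree $d_j$ of its $j$-th host (using counters of how many nodes currently have each degree), producing a host request $(v_{n_0+i},j,d_j)$ with time $t=\ell i+j$. Phase 2 resolves the requests: let $M(d,t)$ be the set of nodes having degree $d$ after time $t$, with $M(d,0)$ the seed nodes of degree $d$, and new node $v_{n_0+i}$ entering the set of degree-$\ell$ nodes at time $\ell(i+1)$. Processing a request for degree $d$ at time $t$ picks a node $u$ uniformly at random from $M(d,t-1)$, connects it to the requesting new node, and sets $M(d,t)=M(d,t-1)\setminus\{u\}$ and $M(d+1,t)=M(d+1,t-1)\cup\{u\}$. *)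

(* Defs.v *)
From mathcomp Require Import all_boot all_algebra.
Set Implicit Arguments. Unset Strict Implicit. Unset Printing Implicit Defensive.
Import GRing.Theory Num.Theory.
Local Open Scope nat_scope.

Section EMGenPA.
(* n0 seed nodes, N new nodes, each new node issues l host requests. *)
Variables (n0 N l : nat).
Variable e : rel 'I_n0.

(* All nodes: seed nodes 0..n0-1, new node v_{n0+i} is rshift n0 i, i : 'I_N
   (0-based indexing of new nodes). *)
Definition node : finType := 'I_(n0 + N).
(* Host request (v_{n0+i}, j) ; j : 'I_l is the 0-based version of j in 1..l. *)
Definition req : finType := ('I_N * 'I_l)%type.

(* Time of request (i, j): t = l*i + (j+1), so times are 1 .. l*N. *)
Definition time (r : req) : nat := (l * r.1 + r.2).+1.

Definition newnode (i : 'I_N) : node := rshift n0 i.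

Definition seed_deg (v : 'I_n0) : nat := #|[set w | e v w]|.

Definition initM (d : nat) : {set node} :=
  [set u : node | if split u is inl s then seed_deg s == d else false].

(* Requested degrees d_j of the hosts, produced by phase 1. *)
Variable dq : req -> nat.

(* Given the outcome f (host chosen for each request), the sets M(d,t)
   exactly as in the definition: at time t the request with time t moves its
   chosen host u from M(d,t-1) to M(d+1,t); the new node v_{n0+i} enters the
   set of degree-l nodes at time l(i+1). *)
Fixpoint Mset (f : req -> node) (t : nat) : nat -> {set node} :=
  match t with
  | 0 => initM
  | t'.+1 =>
      let M := Mset f t' in
      let M1 := match [pick r : req | time r == t] with
                | Some r =>
                    fun d => if d == dq r then M d :\ f r
                             else if d == (dq r).+1 then f r |: M d
                             else M d
                | None => M
                end in
      match [pick i : 'I_N | l * i.+1 == t] with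
      | Some i => fun d => if d == l then newnode i |: M1 d else M1 d
      | None => M1
      end
  end.

(* Probability that time-ordered processing (each request at time t picks its
   host uniformly from M(d_t, t-1)) produces the host assignment f. *)
Definition pmf_time (f : {ffun req -> node}) : rat :=
  (\prod_(r : req)
     (let C := Mset f (time r).-1 (dq r) in
      if f r \in C then ((#|C|%:R)^-1)%R else 0%R))%R.

(* Partial assignment: the hosts chosen so far by already-processed requests. *)
Definition partial := req -> option node.

Definition upd (g : partial) (r : req) (u : node) : partial :=
  fun r' => if r' == r then Some u else g r'.

(* The set M(d, t-1) as maintained by the algorithm from the information
   available so far: nodes that entered degree d at some time <= t-1 (seed
   nodes of degree d, new nodes when d = l, and hosts chosen by an
   already-processed request of degree d-1 at time <= t-1) and that were not
   removed by an already-processed request of degree d at time <= t-1. *)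
Definition cand (g : partial) (d t : nat) : {set node} :=
  [set u : node |
     [|| u \in initM d,
         (d == l) && (if split u is inr i then l * i.+1 < t else false)
       | (0 < d) && [exists r : req, [&& g r == Some u, dq r == d.-1 & time r < t]]]
     && ~~ [exists r : req, [&& g r == Some u, dq r == d & time r < t]]].

(* Sequential processing of a list of requests; the probability that the
   hosts picked are those given by f. *)
Fixpoint run (s : seq req) (g : partial) (f : req -> node) : rat :=
  match s with
  | [::] => 1%R
  | r :: s' =>
      let C := cand g (dq r) (time r) in
      if f r \in C then ((#|C|%:R)^-1 * run s' (upd g r (f r)) f)%R else 0%R
  end.

Definition deg_time_le (r1 r2 : req) : bool :=
  (dq r1 < dq r2)%N || ((dq r1 == dq r2) && (time r1 <= time r2)%N).

Definition sorted_reqs : seq req := sort deg_time_le (enum req).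

Definition pmf_sorted (f : {ffun req -> node}) : rat :=
  run sorted_reqs (fun _ => None) f.

End EMGenPA.

(* Main.v *)
Require Import Defs.
From mathcomp Require Import all_boot all_algebra zify.
Set Implicit Arguments. Unset Strict Implicit. Unset Printing Implicit Defensive.

Section Proof.
Variables (n0 N l : nat) (e : rel 'I_n0) (dq : req N l -> nat).
Variable f : req N l -> node n0 N.

Lemma time_inj (r1 r2 : req N l) : time r1 = time r2 -> r1 = r2.
Proof.
case: r1 r2 => [i1 j1] [i2 j2]; rewrite /time /= => [[H]].
have l0 : 0 < l by have := ltn_ord j1; lia.
have Hi : i1 = i2 :> nat.
  have := congr1 (divn^~ l) H.
  by rewrite !(mulnC l) !divnMDl // !divn_small //= !addn0.
have Hj : j1 = j2 :> nat by move: H; rewrite Hi => /addnI.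
by congr pair; apply/val_inj.
Qed.

Definition G : partial n0 N l := fun r => Some (f r).

Definition present (t : nat) (u : node n0 N) : bool :=
  if split u is inr i then l * i.+1 <= t else true.
Definition base (u : node n0 N) : nat :=
  if split u is inl s then seed_deg e s else l.
Definition cnt (t : nat) (u : node n0 N) : nat :=
  \sum_(r : req N l) ((f r == u) && (time r <= t)).
Definition Add t d u : bool :=
  [|| u \in initM N e d,
      (d == l) && (if split u is inr i then l * i.+1 <= t else false)
    | (0 < d) && [exists r : req N l, [&& f r == u, dq r == d.-1 & time r <= t]]].
Definition Rem t d u : bool :=
  [exists r : req N l, [&& f r == u, dq r == d & time r <= t]].

Lemma cand_G d t u : (u \in cand e dq G d t.+1) = Add t d u && ~~ Rem t d u.
Proof.
rewrite inE /Add /Rem.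
by congr (_ && ~~ _).
Qed.


Lemma exists_step (P : pred (req N l)) t u :
  [exists r, [&& f r == u, P r & time r <= t.+1]] =
  [exists r, [&& f r == u, P r & time r <= t]] ||
  (if [pick r | time r == t.+1] is Some r0 then (f r0 == u) && P r0 else false).
Proof.
case: pickP => [r0 /eqP H0 | Hn].
- apply/existsP/orP.
  + move=> [r /and3P[a b c]]; move: c; rewrite leq_eqVlt ltnS => /orP[/eqP Ht|Ht].
      right; have <- : r = r0 by apply: time_inj; rewrite Ht H0.
      by rewrite a b.
    by left; apply/existsP; exists r; rewrite a b Ht.
  + move=> [/existsP[r /and3P[a b c]] | /andP[a b]].
      by exists r; rewrite a b (leq_trans c).
    by exists r0; rewrite a b H0 leqnn.
- rewrite orbF; apply: eq_existsb => r.
  by rewrite [time r <= t.+1]leq_eqVlt ltnS Hn.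
Qed.

Lemma cnt_step t u :
  cnt t.+1 u = cnt t u +
  (if [pick r | time r == t.+1] is Some r0 then f r0 == u else false).
Proof.
rewrite /cnt.
have -> : \sum_(r : req N l) ((f r == u) && (time r <= t.+1)) =
  \sum_(r : req N l) (((f r == u) && (time r <= t)) + ((f r == u) && (time r == t.+1))).
  apply: eq_bigr => r _; case: (f r == u) => //=; lia.
rewrite big_split /=; congr (_ + _).
case: pickP => [r0 /eqP H0 | Hn].
- rewrite (bigD1 r0) //= H0 eqxx andbT big1 ?addn0 //.
  move=> r Hr; case Ht: (time r == t.+1); last by rewrite andbF.
  have E : r = r0 by apply: time_inj; rewrite H0; apply/eqP.
  by rewrite E eqxx in Hr.
- by rewrite big1 // => r _; rewrite Hn andbF.
Qed.

Hypothesis l0 : 0 < l.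

Lemma newnodeE (u : node n0 N) i : (u == newnode n0 i) = (split u == inr i).
Proof.
have -> : newnode n0 i = unsplit (inr i) by [].
by rewrite (can2_eq (@splitK n0 N) (@unsplitK n0 N)).
Qed.

Definition ent t (u : node n0 N) : bool :=
  if split u is inr i then l * i.+1 == t.+1 else false.

Lemma ent_pick t u :
  (if [pick i : 'I_N | l * i.+1 == t.+1] is Some i then u == newnode n0 i else false)
  = ent t u.
Proof.
rewrite /ent; case: pickP => [i /eqP Hi | Hn].
- rewrite newnodeE.
  case: (split u) => [s|i'] //=.
  apply/eqP/eqP => [[->] // | H].
  congr inr; apply/val_inj => /=.
  have : l * i'.+1 = l * i.+1 by rewrite H Hi.
  by move/eqP; rewrite eqn_pmul2l // => /eqP [].
- by case: (split u) => [s|i'] //; rewrite Hn.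
Qed.

Lemma present_step t u : present t.+1 u = present t u || ent t u.
Proof. by rewrite /present /ent; case: (split u) => // i; rewrite leq_eqVlt ltnS orbC. Qed.

Lemma ent_notpresent t u : ent t u -> ~~ present t u.
Proof. by rewrite /present /ent; case: (split u) => // i /eqP ->; rewrite ltnn. Qed.

Lemma ent_base t u : ent t u -> base u = l.
Proof. by rewrite /ent /base; case: (split u). Qed.

Definition pr t := [pick r : req N l | time r == t.+1].

Lemma Add_step t d u :
  Add t.+1 d u = [|| Add t d u, (d == l) && ent t u |
     (0 < d) && (if pr t is Some r0 then (f r0 == u) && (dq r0 == d.-1) else false)].
Proof.
rewrite /Add (exists_step (fun r => dq r == d.-1)) /pr.
have -> : (if split u is inr i then l * i.+1 <= t.+1 else false) =
          (if split u is inr i then l * i.+1 <= t else false) || ent t u.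
  by rewrite /ent; case: (split u) => // i; rewrite leq_eqVlt ltnS orbC.
case: (u \in initM N e d); case: (d == l); case: (0 < d); case: (ent t u);
  rewrite /= ?orbT ?orbF ?andbT ?andbF ?orbA //; by rewrite orbAC.
Qed.

Lemma Rem_step t d u :
  Rem t.+1 d u = Rem t d u ||
     (if pr t is Some r0 then (f r0 == u) && (dq r0 == d) else false).
Proof. by rewrite /Rem (exists_step (fun r => dq r == d)). Qed.

Lemma Mset_step t d u :
  (u \in Mset e dq f t.+1 d) =
  ((d == l) && ent t u) ||
  (if pr t is Some r then
      (if d == dq r then (u \in Mset e dq f t d) && (u != f r)
       else if d == (dq r).+1 then (u == f r) || (u \in Mset e dq f t d)
       else u \in Mset e dq f t d)
   else u \in Mset e dq f t d).
Proof.
rewrite -ent_pick /pr /=.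
case: pickP => [r Hr|Hr]; case: pickP => [i Hi|Hi] /=;
  repeat case: ifP => //=; rewrite ?inE ?andbT ?andbF //=.
all: by move=> *; rewrite andbC.
Qed.


Definition Inv t := forall u d,
  [/\ Add t d u = present t u && (base u <= d <= base u + cnt t u),
      Rem t d u = present t u && (base u <= d < base u + cnt t u),
      (u \in Mset e dq f t d) = present t u && (d == base u + cnt t u)
    & (~~ present t u -> cnt t u = 0)].

Lemma Inv0 : Inv 0.
Proof.
move=> u d.
have c0 : cnt 0 u = 0 by rewrite /cnt big1 // => r _; rewrite /time ltn0 andbF.
have R0 : forall P : pred (req N l), [exists r, [&& f r == u, P r & time r <= 0]] = false.
  by move=> P; apply/existsP => -[r]; rewrite /time ltn0 !andbF.
rewrite /Add /Rem !R0 c0 addn0 andbF orbF /present /base /= inE.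
case: (split u) => [s|i] /=.
- split => //; first by case: eqP => [->|]; rewrite ?leqnn //; lia.
  lia.
- have : 0 < l * i.+1 by rewrite muln_gt0 l0.
  move=> H; have -> : (l * i.+1 <= 0) = false by lia.
  by rewrite /= andbF.
Qed.

Lemma Inv_same t u d : Inv t ->
  [/\ Add t d u || (d == l) && ent t u =
        (present t u || ent t u) && (base u <= d <= base u + cnt t u),
      Rem t d u = (present t u || ent t u) && (base u <= d < base u + cnt t u),
      ((d == l) && ent t u) || (u \in Mset e dq f t d) =
        (present t u || ent t u) && (d == base u + cnt t u)
    & ~~ (present t u || ent t u) -> cnt t u = 0].
Proof.
move=> I; have [A R M C] := I u d.
case E: (ent t u); last by rewrite !andbF !orbF A R M.
have np := ent_notpresent E; have b := ent_base E.
rewrite A R M (negbTE np) C // b /= addn0.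
split => //; first by case: eqP => [->|]; rewrite ?leqnn //; lia.
- lia.
- by rewrite andbT orbF.
Qed.

Lemma Inv_step t : Inv t ->
  (forall r, pr t = Some r -> f r \in Mset e dq f t (dq r)) -> Inv t.+1.
Proof.
move=> I Hv u d.
rewrite Add_step Rem_step Mset_step cnt_step present_step.
have [A S M C] := Inv_same u d I.
rewrite -/(pr t).
case Hp: (pr t) => [r|]; last by rewrite !andbF !orbF addn0.
have := Hv r Hp; have [_ _ M3 _] := I (f r) (dq r); rewrite M3.
move=> /andP[pfr /eqP dqr].
case: (eqVneq u (f r)) => [Eu|nu].
- rewrite Eu.
  have nen : ent t (f r) = false.
    by case E: (ent t (f r)) => //; rewrite (negbTE (ent_notpresent E)) in pfr.
  have [A1 R1 M1 _] := I (f r) d.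
  rewrite A1 R1 M1 pfr nen dqr /=.
  split => //; try lia.
  case: ifP => /eqP H1; first by rewrite andbF; lia.
  by case: ifP => /eqP H2; lia.
- rewrite /= !andbF !orbF addn0 !andbT.
  split => //.
  rewrite -M; congr (_ || _).
  by case: ifP => //; case: ifP.
Qed.


Definition Vd t := forall r, time r <= t -> f r \in Mset e dq f (time r).-1 (dq r).

Lemma Inv_all t : Vd t -> Inv t.
Proof.
elim: t => [|t IH] H; first exact: Inv0.
apply: Inv_step.
  by apply: IH => r Hr; apply: H; apply: leq_trans Hr _.
rewrite /pr => r; case: pickP => // r' /eqP Ht [<-].
by have := H r'; rewrite Ht leqnn => /(_ isT).
Qed.

Lemma candM t d : Vd t -> cand e dq G d t.+1 = Mset e dq f t d.
Proof.
move=> H; apply/setP => u; rewrite cand_G.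
have [A R M _] := Inv_all H u d.
rewrite A R M; case: (present t u) => //=; lia.
Qed.

End Proof.

Section Run.
Variables (n0 N l : nat) (e : rel 'I_n0) (dq : req N l -> nat).
Variable f : req N l -> node n0 N.

Definition termK (r : req N l) : rat :=
  let C := cand e dq (G f) (dq r) (time r) in
  if f r \in C then ((#|C|%:R)^-1)%R else 0%R.

Lemma deg_time_le_trans : transitive (deg_time_le dq).
Proof. move=> a b c; rewrite /deg_time_le; lia. Qed.

Lemma deg_time_le_total : total (deg_time_le dq).
Proof. move=> a b; rewrite /deg_time_le; lia. Qed.

Lemma ex_eq (g : partial n0 N l) u D T :
  (forall r', dq r' == D -> time r' < T -> g r' = Some (f r')) ->
  [exists r', [&& g r' == Some u, dq r' == D & time r' < T]] =
  [exists r', [&& G f r' == Some u, dq r' == D & time r' < T]].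
Proof.
move=> H; apply: eq_existsb => r'.
case E1: (dq r' == D); case E2: (time r' < T); rewrite ?andbF //.
by rewrite H.
Qed.

Lemma run_prod (s : seq (req N l)) (g : partial n0 N l) :
  (forall r x, g r = Some x -> x = f r) ->
  (forall r, g r = None -> r \in s) ->
  sorted (deg_time_le dq) s ->
  run e dq s g f = (\prod_(r <- s) termK r)%R.
Proof.
elim: s g => [|r s IH] g H1 H2 Hs; first by rewrite big_nil.
rewrite big_cons /= /termK.
have Hmin : all (deg_time_le dq r) s := order_path_min deg_time_le_trans Hs.
have Hsmall : forall r', ~~ deg_time_le dq r r' -> g r' = Some (f r').
  move=> r' Hn; case E: (g r') => [x|]; first by rewrite (H1 _ _ E).
  have := H2 _ E; rewrite inE => /orP[/eqP Er|Hin].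
    by rewrite Er /deg_time_le leqnn eqxx orbT in Hn.
  by move/allP: Hmin => /(_ _ Hin); rewrite (negbTE Hn).
have -> : cand e dq g (dq r) (time r) = cand e dq (G f) (dq r) (time r).
  apply/setP => u; rewrite !inE.
  rewrite (@ex_eq g u (dq r)); last first.
    move=> r' /eqP E1 E2; apply: Hsmall; rewrite /deg_time_le; lia.
  case: (posnP (dq r)) => [->|hd] //=.
  rewrite (@ex_eq g u (dq r).-1) //.
  move=> r' /eqP E1 E2; apply: Hsmall; rewrite /deg_time_le; lia.
case: ifP => Hin; last by rewrite GRing.mul0r.
congr (_ * _)%R; apply: IH.
- move=> r' x; rewrite /upd; case: eqP => [-> [<-] //|_]; exact: H1.
- move=> r'; rewrite /upd; case: eqP => // Ne E.
  by have := H2 _ E; rewrite inE => /orP[/eqP //|].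
- exact: path_sorted Hs.
Qed.

End Run.

Lemma pmf_sorted_prod n0 N l (e : rel 'I_n0) dq (fF : {ffun req N l -> node n0 N}) :
  pmf_sorted e dq fF = (\prod_(r : req N l) termK e dq fF r)%R.
Proof.
rewrite /pmf_sorted /sorted_reqs (@run_prod _ _ _ e dq fF) //.
- rewrite (perm_big (enum (req N l))); last by rewrite perm_sort perm_refl.
  by rewrite big_enum.
- by move=> r; rewrite mem_sort mem_enum.
- by apply: sort_sorted; apply: deg_time_le_total.
Qed.

Theorem lemma6 (n0 N l : nat) (e : rel 'I_n0)
    (e_sym : symmetric e) (e_irr : irreflexive e) (l_le_n0 : (l <= n0)%N)
    (dq : 'I_N * 'I_l -> nat) (f : {ffun 'I_N * 'I_l -> 'I_(n0 + N)}) :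
  pmf_sorted e dq f = pmf_time e dq f.
Proof.
rewrite pmf_sorted_prod /pmf_time.
case: (boolP [forall r, f r \in Mset e dq f (time r).-1 (dq r)]) => [/forallP Hall | /forallPn [r0 Hr0]].
- apply: eq_bigr => r _.
  have l0 : 0 < l by have := ltn_ord r.2; lia.
  have Hv : Vd e dq f (time r).-1 by move=> r' _; apply: Hall.
  have E : cand e dq (G f) (dq r) (time r) = Mset e dq f (time r).-1 (dq r)
    := candM l0 (dq r) Hv.
  by rewrite /termK E.
- pose P t := [exists r, (time r == t) && (f r \notin Mset e dq f (time r).-1 (dq r))].
  have exP : exists t, P t by exists (time r0); apply/existsP; exists r0; rewrite eqxx.
  case: (ex_minnP exP) => t0 /existsP [r1 /andP[/eqP Ht1 Hr1]] Hmin.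
  have l0 : 0 < l by have := ltn_ord r1.2; lia.
  have Hv : Vd e dq f (time r1).-1.
    move=> r' Hr'; apply/negPn/negP => Hbad.
    have := Hmin (time r'); rewrite /P.
    have -> : [exists r, (time r == time r') && (f r \notin Mset e dq f (time r).-1 (dq r))].
      by apply/existsP; exists r'; rewrite eqxx Hbad.
    move=> /(_ isT); rewrite -Ht1; move: Hr'; rewrite /time; lia.
  have E : cand e dq (G f) (dq r1) (time r1) = Mset e dq f (time r1).-1 (dq r1)
    := candM l0 (dq r1) Hv.
  rewrite (bigD1 r1) // [RHS](bigD1 r1) //= /termK E (negbTE Hr1).
  by rewrite !GRing.mul0r.
Qed.
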